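(* Let $G_n$ be the de Bruijn graph of span $n$ defined in the context. Let $r$ be any vertex of $G_n$, and for each vertex $v\neq r$ of $G_n$ let $e_v$ be any arc of $G_n$ with tail $v$. Let $H$ be the spanning subgraph of $G_n$ whose arc set is $\{e_v : v\in V(G_n)\setminus\{r\}\}$. Let $W$ be a walk in $G_n$ starting at $r$ which avoids $H$. Let $v$ be a vertex of $G_n$ which is not on a directed cycle of $H$ and which is exhausted by $W$, and let $W_v$ be the initial subwalk of $W$ starting at $r$ and finishing at the moment it exhausts $v$. Then every vertex $u$ of $H_v$ is exhausted by $W_v$.
   Context: Let $A$ be a finite alphabet with a linear order $<$. Let $\mathcal{F}$ be a set of words over $A$ (forbidden words). A word $w$ is said to be in the language if the bi-infinite periodic sequence $\cdots www\cdots$ contains no element of $\mathcal{F}$ as a factor (contiguous subword). For $k\ge 1$, $W_k$ denotes the set of words of length $k$ in the language. Fix $n\geq 1$ and consider the directed graph whose vertex set is $A^n$ and whose arcs are the pairs $(as,sb)$ with $a,b\in A$, $s\in A^{n-1}$ and $asb\in W_{n+1}$; the label of the arc $(as,sb)$ is $b$. The de Bruijn graph of span $n$, $G_n$, is a strongly connected component of maximum size of this digraph. Vertices are identified with their words. A walk $W$ in $G_n$ starting at $r$ avoids $H$ if it is constructed as follows: start at $r$; if the current walk is $v_0e_0\cdots v_i$ and there is an arc with tail $v_i$ not in $H$ that has not yet been used by the walk, extend the walk by one such arc; otherwise, if the arc $e_{v_i}$ (when defined) has not yet been used, extend the walk by $e_{v_i}$; otherwise stop. A walk exhausts a vertex $x$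 if it uses every arc of $G_n$ having $x$ as head or as tail. For a vertex $v$ not lying on a directed cycle of $H$, $H_v$ denotes the subtree of $H$ converging to $v$, i.e. the set of vertices $u$ (including $v$) from which there is a directed path to $v$ using arcs of $H$. *)

(* Defs.v *)
From mathcomp Require Import all_boot all_order all_algebra.
From mathcomp Require Import boolp.
From Stdlib Require Import Relations.
Set Implicit Arguments. Unset Strict Implicit. Unset Printing Implicit Defensive.

Section DeBruijn.
Variable A : finType.

(* The bi-infinite periodic sequence ... w w w ... as a function int -> A,
   position 0 being the first letter of (one copy of) w.  Only used for w <> [::]
   (x0 is a dummy default, irrelevant since the index is < size w). *)
Definition periodic_seq (x0 : A) (w : seq A) (i : int) : A :=
  nth x0 w `|(i %% (size w)%:Z)%Z|%N.

Definition factor_of_periodic (u w : seq A) : Prop :=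
  match w with
  | [::] => False
  | x0 :: _ => exists i : int,
      u = mkseq (fun j => periodic_seq x0 w (i + j%:Z)%R) (size u)
  end.

Definition in_language (F : seq A -> Prop) (w : seq A) : Prop :=
  ~ (exists u, F u /\ factor_of_periodic u w).

Definition Wk (F : seq A -> Prop) (k : nat) (w : seq A) : Prop :=
  size w = k /\ in_language F w.

Definition dbarc (F : seq A -> Prop) (n : nat) (x y : n.-tuple A) : Prop :=
  exists (a b : A) (s : seq A),
    val x = a :: s /\ val y = rcons s b /\ Wk F n.+1 (a :: rcons s b).

Definition reach (F : seq A -> Prop) (n : nat) : relation (n.-tuple A) :=
  clos_refl_trans (n.-tuple A) (@dbarc F n).

Definition scc (F : seq A -> Prop) (n : nat) (x : n.-tuple A) : {set n.-tuple A} :=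
  [set y | `[< reach F x y /\ reach F y x >] ].

Definition is_debruijn (F : seq A -> Prop) (n : nat) (V : {set n.-tuple A}) : Prop :=
  (exists x, V = scc F x) /\ (forall x : n.-tuple A, #|scc F x| <= #|V|).

Definition garc (F : seq A -> Prop) (n : nat) (V : {set n.-tuple A})
  (x y : n.-tuple A) : Prop := x \in V /\ y \in V /\ dbarc F x y.

Definition inH (n : nat) (V : {set n.-tuple A}) (r : n.-tuple A)
  (next : n.-tuple A -> n.-tuple A) (x y : n.-tuple A) : Prop :=
  x \in V /\ x <> r /\ y = next x.

(* The walk r, p_0, p_1, ... given by its vertex sequence r :: p ;
   its arcs (in order) are the consecutive pairs. *)
Definition walk_arcs (n : nat) (r : n.-tuple A) (p : seq (n.-tuple A)) :=
  zip (r :: p) p.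

Definition free_arc (F : seq A -> Prop) (n : nat) (V : {set n.-tuple A})
  (r : n.-tuple A) (next : n.-tuple A -> n.-tuple A)
  (used : seq (n.-tuple A * n.-tuple A)) (x : n.-tuple A) : Prop :=
  exists y, garc F V x y /\ ~ inH V r next x y /\ (x, y) \notin used.

(* W = r :: p is a (complete) walk starting at r that avoids H *)
Definition avoids (F : seq A -> Prop) (n : nat) (V : {set n.-tuple A})
  (r : n.-tuple A) (next : n.-tuple A -> n.-tuple A) (p : seq (n.-tuple A)) : Prop :=
  (forall i, i < size p ->
     let x := last r (take i p) in
     let used := walk_arcs r (take i p) in
     let y := nth r p i in
     (free_arc F V r next used x ->
        garc F V x y /\ ~ inH V r next x y /\ (x, y) \notin used) /\
     (~ free_arc F V r next used x ->
        x <> r /\ (x, next x) \notin used /\ y = next x)) /\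
  (let x := last r p in
   ~ free_arc F V r next (walk_arcs r p) x /\
   (x = r \/ (x, next x) \in walk_arcs r p)).

Definition exhausts (F : seq A -> Prop) (n : nat) (V : {set n.-tuple A})
  (arcs : seq (n.-tuple A * n.-tuple A)) (x : n.-tuple A) : Prop :=
  forall y, (garc F V x y -> (x, y) \in arcs) /\ (garc F V y x -> (y, x) \in arcs).

Definition on_H_cycle (n : nat) (V : {set n.-tuple A}) (r : n.-tuple A)
  (next : n.-tuple A -> n.-tuple A) (v : n.-tuple A) : Prop :=
  exists y, inH V r next v y /\ clos_refl_trans _ (inH V r next) y v.

Definition in_Hsubtree (n : nat) (V : {set n.-tuple A}) (r : n.-tuple A)
  (next : n.-tuple A -> n.-tuple A) (v u : n.-tuple A) : Prop :=
  clos_refl_trans _ (inH V r next) u v.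

End DeBruijn.

(* Main.v *)
Require Import Defs.
From mathcomp Require Import all_boot all_order all_algebra.
From mathcomp Require Import boolp.
From Stdlib Require Import Relations.
Set Implicit Arguments. Unset Strict Implicit. Unset Printing Implicit Defensive.
Import GRing.Theory Num.Theory.

Lemma ps_rot (A : finType) (x0 x1 c : A) (t : seq A) (z : int) :
  periodic_seq x0 (rcons t c) z = periodic_seq x1 (c :: t) (z + 1)%R.
Proof.
rewrite /periodic_seq size_rcons /=.
set N := (size t).+1.
have N0 : (N%:Z != 0)%R by [].
have := modz_ge0 z N0.
case Ez: (z %% N%:Z)%Z => [m|m] // _.
have mN : m < N.
  have := ltz_pmod z (isT : (0 < N%:Z)%R). by rewrite Ez ltz_nat.
have -> : ((z + 1) %% N%:Z)%Z = ((m + 1)%N %% N)%N.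
  by rewrite -modzDml Ez -modz_nat.
rewrite /= nth_rcons.
case: (ltngtP m (size t)) => H.
- rewrite modn_small ?addn1 //= ?ltnS //.
  by apply: set_nth_default.
- by move: mN; rewrite /N ltnS leqNgt H.
- by rewrite H addn1 modnn.
Qed.

Lemma factor_rot (A : finType) (u w : seq A) :
  factor_of_periodic u (rot 1 w) -> factor_of_periodic u w.
Proof.
case: w => [|c t] //.
have ->: rot 1 (c :: t) = rcons t c by rewrite /rot /= drop0 take0 cats1.
rewrite /factor_of_periodic.
case Et: (rcons t c) => [|d t'] //.
move=> [i Hi]; exists (i + 1)%R.
rewrite {1}Hi -Et; apply: eq_mkseq => j.
by rewrite (ps_rot d c) addrAC; reflexivity.
Qed.

Lemma lang_rot (A : finType) F (w : seq A) :
  in_language F w -> in_language F (rot 1 w).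
Proof.
move=> H [u [Fu Hu]]; apply: H; exists u; split=> //; exact: factor_rot.
Qed.

Lemma lang_iter (A : finType) F (w : seq A) m :
  in_language F w -> in_language F (iter m (rot 1) w).
Proof. by elim: m => //= m IH /IH /lang_rot. Qed.

Lemma iter_rot (T : Type) (w : seq T) m : m <= size w -> iter m (rot 1) w = rot m w.
Proof.
elim: m => [|m IH] /= Hm; first by rewrite rot0.
by rewrite IH ?(ltnW Hm) // -rotS.
Qed.
Lemma arc_word (A : finType) F (n : nat) (x0 : n.-tuple A) (w : seq A) :
  0 < n -> size w = n.+1 -> in_language F w ->
  dbarc F (insubd x0 (take n w)) (insubd x0 (drop 1 w)).
Proof.
case: n x0 => // n x0 _.
case: w => [|c t] //= [].
case/lastP: t => [|s b] //; rewrite size_rcons => -[Hs] Hl.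
exists c, b, s.
rewrite !val_insubd /= drop0 size_rcons Hs eqxx -cats1 take_size_cat //= Hs eqxx.
split=> //; split=> //; split; first by rewrite /= size_cat Hs addn1.
by rewrite cats1.
Qed.

Lemma drop1_rot (T : Type) (w : seq T) n :
  size w = n.+1 -> drop 1 w = take n (rot 1 w).
Proof.
case: w => [|c t] //= [Ht].
by rewrite drop0 /rot /= drop0 take0 -Ht take_size_cat.
Qed.

Lemma reach_cycle (A : finType) F (n : nat) (x0 : n.-tuple A) (w : seq A) :
  0 < n -> size w = n.+1 -> in_language F w ->
  reach F (insubd x0 (drop 1 w)) (insubd x0 (take n w)).
Proof.
move=> n0 Hs Hl.
set v := fun j => insubd x0 (take n (iter j (rot 1) w)) : n.-tuple A.
have step : forall j, dbarc F (v j) (v j.+1).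
  move=> j; have sj : size (iter j (rot 1) w) = n.+1.
    by elim: j => //= j IH; rewrite size_rot.
  rewrite /v /= -drop1_rot //.
  apply: arc_word => //; exact: lang_iter.
have H : forall m, reach F (v 1) (v m.+1).
  elim=> [|m IH]; first exact: rt_refl.
  apply: rt_trans IH (rt_step _ _ _ _ (step _)).
have E : iter n.+1 (rot 1) w = w.
  by rewrite iter_rot ?Hs // -Hs rot_size.
by have := H n; rewrite /v E /= -drop1_rot.
Qed.

Lemma in_scc (A : finType) F n (x y : n.-tuple A) :
  (y \in scc F x) <-> (reach F x y /\ reach F y x).
Proof. by rewrite /scc inE; split => /asboolP. Qed.

Lemma V_closed (A : finType) F (n : nat) (V : {set n.-tuple A}) (x y : n.-tuple A) :
  0 < n -> is_debruijn F V -> x \in V -> dbarc F x y -> y \in V.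
Proof.
move=> n0 [[x1 ->] _] /in_scc [H1 H2] Hxy.
apply/in_scc; split; first exact: rt_trans H1 (rt_step _ _ _ _ Hxy).
apply: rt_trans H2.
case: Hxy => a [b [s [Ex [Ey [Hs Hl]]]]].
have := reach_cycle x n0 Hs Hl.
have -> : insubd x (drop 1 (a :: rcons s b)) = y.
  by apply: val_inj; rewrite val_insubd /= drop0 -Ey size_tuple eqxx.
have -> : insubd x (take n (a :: rcons s b)) = x.
  apply: val_inj; rewrite val_insubd -rcons_cons -Ex -cats1 (take_size_cat _ (size_tuple x)).
  by rewrite size_tuple eqxx.
by [].
Qed.
Lemma deg_le (A : finType) F (n : nat) (V : {set n.-tuple A}) (u : n.-tuple A) :
  0 < n -> is_debruijn F V -> u \in V ->
  #|[set e : n.-tuple A * n.-tuple A | (e.2 == u) && `[< garc F V e.1 e.2 >] ]|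
  <= #|[set e : n.-tuple A * n.-tuple A | (e.1 == u) && `[< garc F V e.1 e.2 >] ]|.
Proof.
move=> n0 HV uV.
case Eu: (val u) => [|a0 s0]; first by move: (size_tuple u); rewrite Eu => H; rewrite -H in n0.
have sz : forall a, size (rcons s0 a) = n.
  by move=> a; rewrite size_rcons -(size_tuple u) Eu.
pose g (e : n.-tuple A * n.-tuple A) :=
  (u, insubd u (rcons s0 (head a0 (val e.1))) : n.-tuple A).
have vg : forall e, val (g e).2 = rcons s0 (head a0 (val e.1)).
  by move=> e; rewrite /= val_insubd sz eqxx.
have Gin : forall e, e \in [set e : n.-tuple A * n.-tuple A | (e.2 == u) && `[< garc F V e.1 e.2 >] ] ->
   exists a s b, [/\ e = (e.1, u), val e.1 = a :: s, val u = rcons s b,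
     in_language F (a :: rcons s b) & e.1 \in V].
  case=> z u'; rewrite inE /= => /andP [/eqP -> /asboolP [zV [_ [a [b [s [E1 [E2 [_ L]]]]]]]]].
  by exists a, s, b.
rewrite -(card_in_imset (f := g)).
  apply: subset_leq_card; apply/subsetP => e' /imsetP [e He ->].
  have [a [s [b [Ee E1 E2 L zV]]]] := Gin e He.
  rewrite inE /= eqxx /=; apply/asboolP.
  have D : dbarc F u (g e).2.
    exists a0, a, s0; split=> //; split; first by rewrite vg E1.
    split; first by rewrite /= sz.
    have -> : a0 :: rcons s0 a = rot 1 (a :: rcons s b) by rewrite rot1_cons -E2 Eu.
    exact: lang_rot.
  by split=> //; split=> //; apply: V_closed D.
move=> e1 e2 H1 H2 Hg.
have [a1 [s1 [b1 [Ee1 E11 E21 _ _]]]] := Gin e1 H1.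
have [a2 [s2 [b2 [Ee2 E12 E22 _ _]]]] := Gin e2 H2.
have Ea : a1 = a2.
  have := congr1 (fun x => val x.2) Hg; rewrite /= !vg E11 E12 /=.
  exact: rcons_injr.
have [Es _] : (s1, b1) = (s2, b2) by apply: rcons_inj; rewrite -E21 -E22.
rewrite Ee1 Ee2; congr (_, _); apply: val_inj; by rewrite E11 E12 Ea Es.
Qed.
Lemma walk_arcs_rcons (A : finType) n (r : n.-tuple A) t y :
  walk_arcs r (rcons t y) = rcons (walk_arcs r t) (last r t, y).
Proof. by elim: t r => [|z t IH] r //=; rewrite /walk_arcs /= in IH *; rewrite IH. Qed.

Lemma count_balance (A : finType) n (r : n.-tuple A) q u :
  count (fun e => e.1 == u) (walk_arcs r q) + (last r q == u) =
  (r == u) + count (fun e => e.2 == u) (walk_arcs r q).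
Proof.
elim: q r => [|y q IH] r /=; first by rewrite addnC.
rewrite /walk_arcs /= in IH *.
by rewrite -addnA IH addnA.
Qed.

Definition Inv (A : finType) F n (V : {set n.-tuple A}) r next q :=
  [/\ forall e, e \in walk_arcs r q -> garc F V e.1 e.2,
      last r q \in V, uniq (walk_arcs r q) &
      forall u, u \in V -> u <> r -> (u, next u) \in walk_arcs r q ->
        forall y, garc F V u y -> (u, y) \in walk_arcs r q].

Lemma inv_take (A : finType) F n (V : {set n.-tuple A}) r next p i :
  r \in V ->
  (forall x, x \in V -> x <> r -> garc F V x (next x)) ->
  avoids F V r next p -> i <= size p -> Inv F V r next (take i p).
Proof.
move=> rV Hnext [Hstep _].
elim: i => [|i IH] Hi.
  by rewrite take0; split=> // u _ _; rewrite in_nil.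
have [G1 G2 G3 G4] := IH (ltnW Hi).
rewrite (take_nth r Hi) /Inv walk_arcs_rcons last_rcons.
have [Hf Hnf] := Hstep i Hi.
move: Hf Hnf G2 G1 G3 G4.
move: (last r (take i p)) (walk_arcs r (take i p)) (nth r p i) => x used y Hf Hnf G2 G1 G3 G4.
case: (pselect (free_arc F V r next used x)) => Hfree.
- have [gxy [nH nu]] := Hf Hfree.
  split.
  + move=> e; rewrite mem_rcons in_cons => /orP [/eqP -> // | ]; exact: G1.
  + by case: gxy => _ [].
  + by rewrite rcons_uniq nu G3.
  + move=> u uV ur; rewrite mem_rcons in_cons => /orP [/eqP [eu ey] | Hu] z guz.
      by exfalso; apply: nH; split; rewrite -eu.
    by rewrite mem_rcons in_cons (G4 u uV ur Hu z guz) orbT.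
- have [xr [nu ey]] := Hnf Hfree.
  subst y.
  have gxy : garc F V x (next x) by apply: Hnext => //.
  split.
  + move=> e; rewrite mem_rcons in_cons => /orP [/eqP -> // | ]; exact: G1.
  + by case: gxy => _ [].
  + by rewrite rcons_uniq nu G3.
  + move=> u uV ur; rewrite mem_rcons in_cons => /orP [/eqP [eu _] | Hu] z guz; last first.
      by rewrite mem_rcons in_cons (G4 u uV ur Hu z guz) orbT.
    subst u; rewrite mem_rcons in_cons.
    case: (eqVneq z (next x)) => [-> | zn]; first by rewrite eqxx.
    case Hin: ((x, z) \in used); first by rewrite orbT.
    exfalso; apply: Hfree.
    exists z; split=> //; split; last by rewrite Hin.
    by case=> _ [_ ez]; rewrite ez eqxx in zn.
Qed.
Lemma card_count (T : finType) (s : seq T) (P : pred T) :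
  uniq s -> #|[set e | (e \in s) && P e]| = count P s.
Proof.
move=> us; rewrite -size_filter -(card_uniqP (filter_uniq P us)).
by apply: eq_card => e; rewrite inE mem_filter andbC.
Qed.

Lemma exhaust_step (A : finType) F n (V : {set n.-tuple A}) r next q u :
  0 < n -> is_debruijn F V -> Inv F V r next q ->
  u \in V -> u <> r -> (u, next u) \in walk_arcs r q ->
  exhausts F V (walk_arcs r q) u.
Proof.
move=> n0 HV [G1 G2 G3 G4] uV ur Hun.
set s := walk_arcs r q.
set Gin := [set e : n.-tuple A * n.-tuple A | (e.2 == u) && `[< garc F V e.1 e.2 >] ].
set Gout := [set e : n.-tuple A * n.-tuple A | (e.1 == u) && `[< garc F V e.1 e.2 >] ].
set Sin := [set e | (e \in s) && (fun e : n.-tuple A * n.-tuple A => e.2 == u) e].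
set Sout := [set e | (e \in s) && (fun e : n.-tuple A * n.-tuple A => e.1 == u) e].
have h1 : #|Gin| <= #|Gout| by apply: deg_le.
have h2 : #|Gout| <= #|Sout|.
  apply: subset_leq_card; apply/subsetP => -[a b]; rewrite !inE /= => /andP [/eqP -> /asboolP g].
  by rewrite eqxx andbT; apply: G4.
have h3 : #|Sout| <= #|Sin|.
  rewrite /Sout /Sin !card_count //.
  have := count_balance r q u; rewrite -/s.
  have -> : (r == u) = false by apply/eqP => E; apply: ur.
  rewrite /= add0n => <-; exact: leq_addr.
have sub : Sin \subset Gin.
  apply/subsetP => -[a b]; rewrite !inE /= => /andP [H /eqP E].
  by rewrite E eqxx /=; apply/asboolP; have := G1 _ H; rewrite /= E.
have EG : Sin = Gin.
  apply/eqP; rewrite eqEcard sub /=; apply: leq_trans h1 (leq_trans h2 h3).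
move=> y; split => g.
  by apply: G4.
have : (y, u) \in Gin by rewrite inE /= eqxx; apply/asboolP.
by rewrite -EG inE => /andP [].
Qed.
Theorem lemma1 (A : finType) (F : seq A -> Prop) (n : nat)
  (V : {set n.-tuple A}) (r : n.-tuple A) (next : n.-tuple A -> n.-tuple A)
  (p : seq (n.-tuple A)) (v : n.-tuple A) (k : nat) :
  0 < n ->
  is_debruijn F V ->
  r \in V ->
  (forall x, x \in V -> x <> r -> garc F V x (next x)) ->
  avoids F V r next p ->
  v \in V ->
  ~ on_H_cycle V r next v ->
  exhausts F V (walk_arcs r p) v ->
  k <= size p ->
  exhausts F V (walk_arcs r (take k p)) v ->
  (forall j, j < k -> ~ exhausts F V (walk_arcs r (take j p)) v) ->
  forall u, in_Hsubtree V r next v u ->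
    exhausts F V (walk_arcs r (take k p)) u.
Proof.
move=> n0 HV rV Hnext Hav vV _ _ Hk Hv _ u Hu.
have I := inv_take rV Hnext Hav Hk.
move: Hv; have := clos_rt_rt1n _ _ _ _ Hu.
elim=> [//|x y z Hxy _ IH] Hz.
case: Hxy => xV [xr ey]; subst y.
apply: (exhaust_step n0 HV I xV xr).
have [_ H] := IH Hz x.
exact: H (Hnext x xV xr).
Qed.
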